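(* For $\beta,\gamma\in\mathbb{C}\setminus\{0,-1,-2\}$, the modules $\mathbb{M}_\beta$ and $\mathbb{M}_\gamma$ are isomorphic $B_{5,10}$-modules if and only if $(1+\beta)^2=(1+\gamma)^2$, i.e. if and only if $\beta=\gamma$ or $\beta+\gamma=-2$.
   Context: Let $Z=\mathbb{C}[[t]]$. Let $\Gamma_{10}$ be the quiver with vertices $0,1,\dots,9$ (indices taken mod $10$) on a cycle and arrows $x_i\colon i-1\to i$, $y_i\colon i\to i-1$ for $i=1,\dots,10$. Let $B_{5,10}$ be the completed path algebra of $\Gamma_{10}$ modulo the closed ideal generated by $xy=yx$ and $x^5=y^5$ at every vertex. For $b=(b_1,\dots,b_{10})\in Z^{10}$ with $\sum_i b_i=0$, the $B_{5,10}$-module $\mathbb{M}(b)$ has $V_i=Z\oplus Z$ at every vertex, and for odd $j$: $x_j=\begin{pmatrix} t& b_j\\ 0&1\end{pmatrix}$, $y_j=\begin{pmatrix} 1&-b_j\\0&t\end{pmatrix}$; for even $j$: $x_j=\begin{pmatrix}1&b_j\\0&t\end{pmatrix}$, $y_j=\begin{pmatrix}t&-b_j\\0&1\end{pmatrix}$. An isomorphism $\mathbb{M}(b)\to\mathbb{M}(c)$ is a family of invertible $Z$-linear maps $\varphi_i\colon Z^2\to Z^2$ commuting with all $x_i$ and $y_i$. For odd $i$ write $B_i=b_i+b_{i+1}$ (indices mod $10$). For $\beta\in\mathbb{C}\setminus\{0,-1,-2\}$, $\mathbb{M}_\beta$ denotes $\mathbb{M}(b)$ for a tuple $b$ with $B_1=\beta$,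 $B_3=1$, $B_5=-1$, $B_7=-\beta-1$, $B_9=1$ (e.g. $b_i=B_i$ for odd $i$ and $b_i=0$ for even $i$). *)

(* Defs.v *)
(* C := R[i] for R : realType (any realType is the real line,
   so R[i] is the field of complex numbers).  Z = C[[t]] is modelled as the ring
   of formal power series  nat -> C  with the Cauchy product; equality of power
   series is coefficientwise. *)
From HB Require Import structures.
From mathcomp Require Import all_boot all_order all_algebra.
From mathcomp Require Import reals complex.
Set Implicit Arguments. Unset Strict Implicit. Unset Printing Implicit Defensive.
Import Order.TTheory GRing.Theory Num.Theory.
Local Open Scope ring_scope.

Section PowerSeries.
Variable K : comNzRingType.

Definition ps := nat -> K.
Definition ps_eq (f g : ps) : Prop := forall n, f n = g n.
Definition psC (c : K) : ps := fun n => if n is 0%N then c else 0.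
Definition psT : ps := fun n => if n == 1%N then 1 else 0.
Definition psadd (f g : ps) : ps := fun n => f n + g n.
Definition psopp (f : ps) : ps := fun n => - f n.
Definition psmul (f g : ps) : ps := fun n => \sum_(i < n.+1) f i * g (n - i)%N.

(* 2x2 matrices over Z = K[[t]], acting on column vectors Z^2 *)
Record mx2 := Mx2 { m11 : ps; m12 : ps; m21 : ps; m22 : ps }.
Definition mx2mul (A B : mx2) : mx2 :=
  Mx2 (psadd (psmul (m11 A) (m11 B)) (psmul (m12 A) (m21 B)))
      (psadd (psmul (m11 A) (m12 B)) (psmul (m12 A) (m22 B)))
      (psadd (psmul (m21 A) (m11 B)) (psmul (m22 A) (m21 B)))
      (psadd (psmul (m21 A) (m12 B)) (psmul (m22 A) (m22 B))).
Definition mx2_eq (A B : mx2) : Prop :=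
  [/\ ps_eq (m11 A) (m11 B), ps_eq (m12 A) (m12 B),
      ps_eq (m21 A) (m21 B) & ps_eq (m22 A) (m22 B)].
Definition mx2_one : mx2 := Mx2 (psC 1) (psC 0) (psC 0) (psC 1).
Definition mx2_invertible (A : mx2) : Prop :=
  exists B, mx2_eq (mx2mul A B) mx2_one /\ mx2_eq (mx2mul B A) mx2_one.

(* Indexing convention (0-based): j : 'I_10 stands for the paper's index j+1.
   Vertex j : 'I_10 is the paper's vertex j.  The arrow x_{j+1} goes from
   vertex j to vertex j+1 (mod 10), y_{j+1} goes back; b j is b_{j+1}.
   The paper's index j+1 is odd iff j is even. *)
Definition xmat (b : 'I_10 -> ps) (j : 'I_10) : mx2 :=
  if ~~ odd j then Mx2 psT (b j) (psC 0) (psC 1)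
  else Mx2 (psC 1) (b j) (psC 0) psT.
Definition ymat (b : 'I_10 -> ps) (j : 'I_10) : mx2 :=
  if ~~ odd j then Mx2 (psC 1) (psopp (b j)) (psC 0) psT
  else Mx2 psT (psopp (b j)) (psC 0) (psC 1).

Definition sum_zero (b : 'I_10 -> ps) : Prop :=
  forall n, \sum_(i < 10) b i n = 0.

Definition M_iso (b c : 'I_10 -> ps) : Prop :=
  exists phi : 'I_10 -> mx2,
    (forall i, mx2_invertible (phi i)) /\
    (forall j : 'I_10,
        mx2_eq (mx2mul (phi (ordS j)) (xmat b j)) (mx2mul (xmat c j) (phi j)) /\
        mx2_eq (mx2mul (phi j) (ymat b j)) (mx2mul (ymat c j) (phi (ordS j)))).

(* B_i = b_i + b_{i+1} for the paper's odd i *)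
Definition Bsum (b : 'I_10 -> ps) (k : nat) : ps :=
  psadd (b (inord k)) (b (inord k.+1)).

(* b is a tuple defining M_beta: B_1 = beta, B_3 = 1, B_5 = -1,
   B_7 = -beta-1, B_9 = 1 (paper's B_{2m+1} is Bsum b (2m)) *)
Definition is_Mbeta_tuple (beta : K) (b : 'I_10 -> ps) : Prop :=
  [/\ ps_eq (Bsum b 0) (psC beta), ps_eq (Bsum b 2) (psC 1),
      ps_eq (Bsum b 4) (psC (-1)), ps_eq (Bsum b 6) (psC (- beta - 1))
    & ps_eq (Bsum b 8) (psC 1)].

End PowerSeries.

(* Main.v *)
Require Import Defs.
From HB Require Import structures.
From mathcomp Require Import all_boot all_order all_algebra.
From mathcomp Require Import reals complex.
From Stdlib Require Import FunctionalExtensionality Ring.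
Import Order.TTheory GRing.Theory Num.Theory.
Local Open Scope ring_scope.

Section PS.
Variable K : fieldType.
Local Notation ps := (ps K).

Definition T (n : nat) (f : ps) : {poly K} := \poly_(i < n.+1) f i.

Lemma psmul_T (f g : ps) n j : (j <= n)%N -> psmul f g j = (T n f * T n g)`_j.
Proof.
move=> hj; rewrite coefM /psmul; apply: eq_bigr => i _.
rewrite !coef_poly; have hi := ltn_ord i.
have h1 : (i < n.+1)%N by apply: leq_trans hi _.
have h2 : (j - i < n.+1)%N by rewrite ltnS (leq_trans (leq_subr _ _)).
by rewrite h1 h2.
Qed.

Lemma ps_ext (f g : ps) : (forall n, f n = g n) -> f = g.
Proof. exact: functional_extensionality. Qed.

Lemma psmulC (f g : ps) : psmul f g = psmul g f.
Proof. apply: ps_ext => n; rewrite (psmul_T f g _ _ (leqnn n)) (psmul_T g f _ _ (leqnn n)).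
have -> : T n f * T n g = T n g * T n f by exact: mulrC.
by [].
Qed.

Lemma psmulE (f g : ps) n : psmul f g n = \sum_(i < n.+1) f i * g (n - i)%N.
Proof. by []. Qed.

Lemma psmulA (f g h : ps) : psmul f (psmul g h) = psmul (psmul f g) h.
Proof.
apply: ps_ext => n.
transitivity ((T n f * (T n g * T n h))`_n).
  rewrite [LHS]psmulE.
  rewrite coefM; apply: eq_bigr => i _.
  by rewrite (psmul_T _ _ _ _ (leq_subr i n)) !coef_poly (ltn_ord i).
rewrite [RHS]psmulE.
rewrite mulrA coefM; apply: eq_bigr => i _.
have hi : (i <= n)%N by rewrite -ltnS.
rewrite (psmul_T _ _ _ _ hi) !coef_poly.
by rewrite ifT // ltnS leq_subr.
Qed.

Lemma psmulDl (f g h : ps) : psmul (psadd f g) h = psadd (psmul f h) (psmul g h).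
Proof.
apply: ps_ext => n; rewrite /psmul /psadd -big_split /=.
by apply: eq_bigr => i _; rewrite mulrDl.
Qed.

Lemma psmul1l (f : ps) : psmul (psC 1) f = f.
Proof.
apply: ps_ext => n; rewrite /psmul big_ord_recl /= mul1r subn0 big1 ?addr0 //.
by move=> i _; rewrite mul0r.
Qed.

Lemma psCmul (c : K) (f : ps) n : psmul (psC c) f n = c * f n.
Proof.
rewrite /psmul big_ord_recl /= subn0 big1 ?addr0 //.
by move=> i _; rewrite mul0r.
Qed.

Definition psminus (f g : ps) := psadd f (psopp g).

Lemma ps_ring : ring_theory (psC 0) (psC 1) (@psadd K) (@psmul K) psminus (@psopp K) (@eq ps).
Proof.
split.
- by move=> f; apply: ps_ext => n; rewrite /psadd /psC; case: n => [|n]; rewrite add0r.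
- by move=> f g; apply: ps_ext => n; rewrite /psadd addrC.
- by move=> f g h; apply: ps_ext => n; rewrite /psadd addrA.
- exact: psmul1l.
- exact: psmulC.
- exact: psmulA.
- exact: psmulDl.
- by [].
- by move=> f; apply: ps_ext => n; rewrite /psadd /psopp /psC subrr; case: n.
Qed.

Add Ring psR : ps_ring.


Lemma psC_add (a c : K) : psC (a + c) = psadd (psC a) (psC c).
Proof. by apply: ps_ext => n; rewrite /psadd /psC; case: n => // n; rewrite addr0. Qed.

Lemma psC_mul (a c : K) : psC (a * c) = psmul (psC a) (psC c).
Proof. by apply: ps_ext => n; rewrite psCmul /psC; case: n => // n; rewrite mulr0. Qed.

Lemma psC_opp (a : K) : psC (- a) = psopp (psC a).
Proof. by apply: ps_ext => n; rewrite /psopp /psC; case: n => // n; rewrite oppr0. Qed.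

Lemma eq_ps (f g : ps) : f = g -> ps_eq f g.
Proof. by move=> ->. Qed.

Local Notation psT := (@psT K).
Definition Dm (r P S : K) : mx2 K := Mx2 (psC P) (psC 0) (psmul (psC r) psT) (psC S).
Definition Om (r P S : K) (e f : ps) : mx2 K :=
  Mx2 (psadd (psC P) (psmul (psC r) e))
      (psminus (psminus (psmul e (psC S)) (psmul f (psC P))) (psmul (psC r) (psmul e f)))
      (psC r) (psminus (psC S) (psmul (psC r) f)).

Ltac mxring := split; apply: eq_ps; rewrite /=; ring.

Lemma even_ok (r P S : K) (e f : ps) :
  mx2_eq (mx2mul (Om r P S e f) (Mx2 psT f (psC 0) (psC 1)))
         (mx2mul (Mx2 psT e (psC 0) (psC 1)) (Dm r P S)) /\ mx2_eq (mx2mul (Dm r P S) (Mx2 (psC 1) (psopp f) (psC 0) psT))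
         (mx2mul (Mx2 (psC 1) (psopp e) (psC 0) psT) (Om r P S e f)).
Proof. split; mxring. Qed.

Lemma odd_ok (r P S C B P2 S2 : K) (e f e1 f1 : ps) :
  psadd e e1 = psC C -> psadd f f1 = psC B ->
  P2 = P + r * C -> S2 = S - r * B -> C * S - B * P - r * C * B = 0 ->
  mx2_eq (mx2mul (Dm r P2 S2) (Mx2 (psC 1) f1 (psC 0) psT))
         (mx2mul (Mx2 (psC 1) e1 (psC 0) psT) (Om r P S e f)) /\ mx2_eq (mx2mul (Om r P S e f) (Mx2 psT (psopp f1) (psC 0) (psC 1)))
         (mx2mul (Mx2 psT (psopp e1) (psC 0) (psC 1)) (Dm r P2 S2)).
Proof.
move=> he hf -> -> hc.
have e1E : e1 = psminus (psC C) e by rewrite -he; ring.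
have f1E : f1 = psminus (psC B) f by rewrite -hf; ring.
have hc' : psmul (psC C) (psC S) = psadd (psmul (psC B) (psC P)) (psmul (psC r) (psmul (psC C) (psC B))).
  by rewrite -!psC_mul -psC_add; congr psC; apply/eqP; rewrite -subr_eq0 -hc opprD addrA mulrA.
subst e1 f1; rewrite /Dm psC_add psC_mul psC_add psC_opp psC_mul.
split; split; apply: eq_ps; rewrite /=; ring [hc'].
Qed.


Lemma inv_det (A : mx2 K) (d : K) : d != 0 ->
  psminus (psmul (m11 A) (m22 A)) (psmul (m12 A) (m21 A)) = psC d ->
  mx2_invertible A.
Proof.
case: A => a b c e /= hd hdet.
set k := psC d^-1.
have Hk : psmul k (psC d) = psC 1 by rewrite -psC_mul mulVf.
have H' : psmul a e = psadd (psC d) (psmul b c) by rewrite -hdet; ring.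
exists (Mx2 (psmul k e) (psmul k (psopp b)) (psmul k (psopp c)) (psmul k a)).
split; split; apply: eq_ps; rewrite /=; ring [H' Hk].
Qed.

Lemma Dm_inv r P S : P * S != 0 -> mx2_invertible (Dm r P S).
Proof. move=> h; apply: (inv_det _ _ h); rewrite /= psC_mul; ring. Qed.

Lemma Om_inv r P S e f : P * S != 0 -> mx2_invertible (Om r P S e f).
Proof. move=> h; apply: (inv_det _ _ h); rewrite /= psC_mul; ring. Qed.


Lemma psmul_0 (f g : ps) : psmul f g 0 = f 0%N * g 0%N.
Proof. by rewrite psmulE big_ord_recl big_ord0 addr0. Qed.

Lemma psmul_1 (f g : ps) : psmul f g 1 = f 0%N * g 1%N + f 1%N * g 0%N.
Proof. by rewrite psmulE !big_ord_recl big_ord0 addr0. Qed.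

End PS.

From mathcomp Require Import ring.

Section PS2.
Variable K : fieldType.
Local Notation ps := (ps K).
Local Notation psT := (@psT K).

Lemma pair_rel (A A1 A2 : mx2 K) (e e1 f f1 : ps) :
 mx2_eq (mx2mul A1 (Mx2 psT f (psC 0) (psC 1))) (mx2mul (Mx2 psT e (psC 0) (psC 1)) A) ->
 mx2_eq (mx2mul A2 (Mx2 (psC 1) f1 (psC 0) psT)) (mx2mul (Mx2 (psC 1) e1 (psC 0) psT) A1) ->
 [/\ m21 A 0%N = 0, m21 A2 1%N = m21 A 1%N, m21 A2 0%N = 0 & [/\
     m11 A2 0%N = m11 A 0%N + (e 0%N + e1 0%N) * m21 A 1%N,
     m22 A2 0%N = m22 A 0%N - (f 0%N + f1 0%N) * m21 A 1%N &
     (e 0%N + e1 0%N) * m22 A 0%N - (f 0%N + f1 0%N) * m11 A 0%N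
       - (e 0%N + e1 0%N) * (f 0%N + f1 0%N) * m21 A 1%N = 0]].
Proof.
case: A A1 A2 => p q r s [p1 q1 r1 s1] [p2 q2 r2 s2] [h11 h12 h21 h22] [k11 k12 k21 k22].
move: (h11 1%N) (h12 0%N) (h21 0%N) (h21 1%N) (h22 0%N).
move: (k11 0%N) (k12 0%N) (k21 0%N) (k21 1%N) (k22 1%N).
rewrite /= /psadd !psmul_0 !psmul_1 /Defs.psT /psC /=.
rewrite !mulr0 !mul0r !mulr1 !mul1r !addr0 !add0r.
move=> A B C D E F G H I J.
rewrite -H mulr0 addr0 in F.
rewrite C D I mul0r add0r in E.
rewrite I in J A.
have s1E : s1 0%N = s 0%N - r 1%N * f 0%N by rewrite -J; ring.
have q1E : q1 0%N = e 0%N * s 0%N - p1 0%N * f 0%N by rewrite -G; ring.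
have s2E : s2 0%N = s1 0%N - r 1%N * f1 0%N by rewrite -E; ring.
split; rewrite ?D ?C -?H //; split.
- by rewrite A F; ring.
- by rewrite s2E s1E; ring.
- move: B; rewrite A q1E s1E F => B.
  move/eqP: B; rewrite -subr_eq0 => /eqP B.
  by rewrite -oppr0 -B; ring.
Qed.


Lemma inv_const (A : mx2 K) : mx2_invertible A ->
  m11 A 0%N * m22 A 0%N - m12 A 0%N * m21 A 0%N != 0.
Proof.
case: A => a b c d [[a' b' c' d'] [[h11 h12 h21 h22] _]].
move: (h11 0%N) (h12 0%N) (h21 0%N) (h22 0%N).
rewrite /= /psadd !psmul_0 /psC /= => e11 e12 e21 e22.
apply/negP => /eqP h0.
have : (a 0%N * d 0%N - b 0%N * c 0%N) * (a' 0%N * d' 0%N - b' 0%N * c' 0%N)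
  = (a 0%N * a' 0%N + b 0%N * c' 0%N) * (c 0%N * b' 0%N + d 0%N * d' 0%N)
    - (a 0%N * b' 0%N + b 0%N * d' 0%N) * (c 0%N * a' 0%N + d 0%N * c' 0%N) by ring.
rewrite e11 e12 e21 e22 h0 mul0r mul1r mulr0 subr0 => /eqP.
by rewrite eq_sym oner_eq0.
Qed.

Lemma xmat_even (b : 'I_10 -> ps) (j : 'I_10) : ~~ odd j -> xmat b j = Mx2 psT (b j) (psC 0) (psC 1).
Proof. by rewrite /xmat => ->. Qed.
Lemma xmat_odd (b : 'I_10 -> ps) (j : 'I_10) : odd j -> xmat b j = Mx2 (psC 1) (b j) (psC 0) psT.
Proof. by rewrite /xmat => ->. Qed.
Lemma ymat_even (b : 'I_10 -> ps) (j : 'I_10) : ~~ odd j -> ymat b j = Mx2 (psC 1) (psopp (b j)) (psC 0) psT.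
Proof. by rewrite /ymat => ->. Qed.
Lemma ymat_odd (b : 'I_10 -> ps) (j : 'I_10) : odd j -> ymat b j = Mx2 psT (psopp (b j)) (psC 0) (psC 1).
Proof. by rewrite /ymat => ->. Qed.

Lemma ordS_inord (n : nat) : (n < 10)%N -> ordS (inord n : 'I_10) = inord (n.+1 %% 10).
Proof. by move=> h; apply: val_inj; rewrite /= !inordK // ltn_mod. Qed.

Lemma get_pair (b c : 'I_10 -> ps) (phi : 'I_10 -> mx2 K) (k : nat) :
  (forall j : 'I_10,
        mx2_eq (mx2mul (phi (ordS j)) (xmat b j)) (mx2mul (xmat c j) (phi j))) ->
  (k < 5)%N ->
  let A := phi (inord k.*2) in let A2 := phi (inord ((k.*2).+2 %% 10)) in
  let e := c (inord k.*2) in let e1 := c (inord (k.*2).+1) in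
  let f := b (inord k.*2) in let f1 := b (inord (k.*2).+1) in
 [/\ m21 A 0%N = 0, m21 A2 1%N = m21 A 1%N, m21 A2 0%N = 0 & [/\
     m11 A2 0%N = m11 A 0%N + (e 0%N + e1 0%N) * m21 A 1%N,
     m22 A2 0%N = m22 A 0%N - (f 0%N + f1 0%N) * m21 A 1%N &
     (e 0%N + e1 0%N) * m22 A 0%N - (f 0%N + f1 0%N) * m11 A 0%N
       - (e 0%N + e1 0%N) * (f 0%N + f1 0%N) * m21 A 1%N = 0]].
Proof.
move=> H hk /=.
have h1 : (k.*2 < 10)%N by rewrite -(doubleS 4) ltn_double.
have h2 : ((k.*2).+1 < 10)%N by rewrite -(doubleS 4) ltn_Sdouble.
have o1 : ~~ odd (inord k.*2 : 'I_10) by rewrite inordK // odd_double.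
have o2 : odd (inord (k.*2).+1 : 'I_10) by rewrite inordK //= odd_double.
have := H (inord k.*2); rewrite xmat_even // xmat_even // ordS_inord // modn_small // => E1.
have := H (inord (k.*2).+1); rewrite xmat_odd // xmat_odd // ordS_inord // => E2.
exact: (pair_rel _ _ _ _ _ _ _ E1 E2).
Qed.


Definition Cs (g : K) (k : nat) : K :=
  match k with 0 => g | 1 => 1 | 2 => -1 | 3 => - g - 1 | _ => 1 end.
Fixpoint Pv (r P0 g : K) (k : nat) : K :=
  match k with 0 => P0 | k'.+1 => Pv r P0 g k' + r * Cs g k' end.
Fixpoint Sv (r S0 be : K) (k : nat) : K :=
  match k with 0 => S0 | k'.+1 => Sv r S0 be k' - r * Cs be k' end.

Lemma Pv_step r P0 g k : (k < 5)%N -> Pv r P0 g 5 = P0 ->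
  Pv r P0 g (k.+1 %% 5) = Pv r P0 g k + r * Cs g k.
Proof.
move=> hk h5; case: (ltnP k 4) => hk4; first by rewrite modn_small.
have -> : k = 4%N by apply/eqP; rewrite eqn_leq hk4 -ltnS hk.
by rewrite (_ : (4.+1 %% 5 = 0)%N) // -[X in X = _]h5.
Qed.

Lemma Sv_step r S0 g k : (k < 5)%N -> Sv r S0 g 5 = S0 ->
  Sv r S0 g (k.+1 %% 5) = Sv r S0 g k - r * Cs g k.
Proof.
move=> hk h5; case: (ltnP k 4) => hk4; first by rewrite modn_small.
have -> : k = 4%N by apply/eqP; rewrite eqn_leq hk4 -ltnS hk.
by rewrite (_ : (4.+1 %% 5 = 0)%N) // -[X in X = _]h5.
Qed.

Lemma half_wrap (k : nat) : (k < 5)%N ->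
  odd ((k.*2).+2 %% 10) = false /\ ((k.*2).+2 %% 10)./2 = (k.+1 %% 5)%N.
Proof. by case: k => [|[|[|[|[|k]]]]]. Qed.

Lemma iso_of (be g r P0 S0 : K) (b c : 'I_10 -> ps) :
  (forall k, (k < 5)%N -> psadd (b (inord k.*2)) (b (inord (k.*2).+1)) = psC (Cs be k)) ->
  (forall k, (k < 5)%N -> psadd (c (inord k.*2)) (c (inord (k.*2).+1)) = psC (Cs g k)) ->
  (forall k, (k < 5)%N -> Cs g k * Sv r S0 be k - Cs be k * Pv r P0 g k
                          - r * Cs g k * Cs be k = 0) ->
  (forall k, (k < 5)%N -> Pv r P0 g k * Sv r S0 be k != 0) ->
  Pv r P0 g 5 = P0 -> Sv r S0 be 5 = S0 ->
  M_iso b c.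
Proof.
move=> hb hc hcon hnz hP hS.
pose phi (i : 'I_10) : mx2 K :=
  if odd i then Om K r (Pv r P0 g i./2) (Sv r S0 be i./2) (c (inord i.-1)) (b (inord i.-1))
  else Dm K r (Pv r P0 g i./2) (Sv r S0 be i./2).
exists phi; split.
  move=> i; have hi : (i./2 < 5)%N.
    by rewrite ltn_half_double.
  by rewrite /phi; case: ifP => _; [apply: Om_inv | apply: Dm_inv]; apply: hnz.
move=> j.
have hj : j = inord j by rewrite inord_val.
have jlt := ltn_ord j.
move: hj jlt; case: j => n /= jlt0 hj jlt; rewrite hj; clear jlt0 hj.
have hn : n = (odd n + (n./2).*2)%N by rewrite odd_double_half.
set k := n./2 in hn.
have hk : (k < 5)%N by rewrite ltn_half_double.
rewrite ordS_inord // /phi !inordK ?ltn_mod //.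
clearbody k; move: (odd n) hn => p hn; subst n.
case: p jlt => /= jlt; rewrite ?add1n ?add0n in jlt *.
- have hw := half_wrap k hk.
  case: hw => -> ->.
  rewrite uphalf_double (xmat_odd b) ?inordK // ?(xmat_odd c) ?inordK //= ?odd_double //.
  rewrite (ymat_odd b) ?inordK // ?(ymat_odd c) ?inordK //= ?odd_double //.
  exact: (odd_ok K r _ _ _ _ _ _ _ _ _ _ (hc k hk) (hb k hk) (Pv_step _ _ _ _ hk hP) (Sv_step _ _ _ _ hk hS) (hcon k hk)).
- have h9 : ((k.*2).+1 < 10)%N by rewrite -(doubleS 4) ltn_Sdouble.
  rewrite modn_small //= odd_double /= ?uphalf_double doubleK.
  rewrite (xmat_even b) ?inordK ?odd_double // (xmat_even c) ?inordK ?odd_double //.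
  rewrite (ymat_even b) ?inordK ?odd_double // (ymat_even c) ?inordK ?odd_double //.
  exact: even_ok.
Qed.

End PS2.

Lemma get_pair2 (K : fieldType) (b c : 'I_10 -> ps K) (phi : 'I_10 -> mx2 K) (k i0 i1 i2 : nat) :
  (forall j : 'I_10,
        mx2_eq (mx2mul (phi (ordS j)) (xmat b j)) (mx2mul (xmat c j) (phi j))) ->
  (k < 5)%N -> i0 = k.*2 -> i1 = (k.*2).+1 -> i2 = ((k.*2).+2 %% 10)%N ->
  let A := phi (inord i0) in let A2 := phi (inord i2) in
  let e := c (inord i0) in let e1 := c (inord i1) in
  let f := b (inord i0) in let f1 := b (inord i1) in
 [/\ m21 A 0%N = 0, m21 A2 1%N = m21 A 1%N, m21 A2 0%N = 0 & [/\ m11 A2 0%N = m11 A 0%N + (e 0%N + e1 0%N) * m21 A 1%N,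
     m22 A2 0%N = m22 A 0%N - (f 0%N + f1 0%N) * m21 A 1%N &
     (e 0%N + e1 0%N) * m22 A 0%N - (f 0%N + f1 0%N) * m11 A 0%N
       - (e 0%N + e1 0%N) * (f 0%N + f1 0%N) * m21 A 1%N = 0]].
Proof. by move=> H hk -> -> ->; apply: get_pair. Qed.

Lemma tuple_Cs (K : fieldType) (be : K) (b : 'I_10 -> ps K) : is_Mbeta_tuple be b ->
  forall k, (k < 5)%N -> psadd (b (inord k.*2)) (b (inord (k.*2).+1)) = psC (Cs K be k).
Proof.
case=> h0 h2 h4 h6 h8 k; case: k => [|[|[|[|[|k]]]]] // _; apply: ps_ext.
- exact: h0.
- exact: h2.
- exact: h4.
- exact: h6.
- exact: h8.
Qed.

Lemma final_alg (K : fieldType) (be g P S rho P2 S2 P8 S8 r8 : K) :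
 g*S - be*P - g*be*rho = 0 -> P2 = P + g*rho -> S2 = S - be*rho -> S2 - P2 - rho = 0 ->
 P = P8 + r8 -> S = S8 - r8 -> S8 - P8 - r8 = 0 -> rho = r8 -> P*S != 0 ->
 be = g \/ be + g = -2.
Proof.
move=> e1 -> -> e2 hP8 hS8 e3 hr hPS.
have e3' : S - P + rho = 0 by rewrite hP8 hS8 hr -e3; ring.
have : (be + g + 2) * rho = 0.
  transitivity ((S - P + rho) - (S - be*rho - (P + g*rho) - rho)); first by ring.
  by rewrite e3' e2 subr0.
move/eqP; rewrite mulf_eq0 => /orP [h | /eqP h0].
- by right; apply/eqP; rewrite -addr_eq0.
- left.
  have hSP : S = P by apply/eqP; rewrite -subr_eq0 -e3' h0 addr0.
  move: e1; rewrite h0 hSP mulr0 subr0 -mulrBl => /eqP; rewrite mulf_eq0 => /orP [|hP].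
    by rewrite subr_eq0 => /eqP ->.
  by move: hPS; rewrite (eqP hP) mul0r eqxx.
Qed.

Lemma neq0_of (K : fieldType) (x y : K) : x = y -> y != 0 -> x != 0.
Proof. by move=> ->. Qed.

Theorem mainTheorem8 (R : realType) (beta gamma : R[i])
  (b c : 'I_10 -> ps R[i]) :
  beta != 0 -> beta != -1 -> beta != -2 ->
  gamma != 0 -> gamma != -1 -> gamma != -2 ->
  sum_zero b -> is_Mbeta_tuple beta b ->
  sum_zero c -> is_Mbeta_tuple gamma c ->
  (M_iso b c <-> (1 + beta) ^+ 2 = (1 + gamma) ^+ 2) /\
  (M_iso b c <-> (beta = gamma \/ beta + gamma = -2)).
Proof.
move=> hb0 hb1 hb2 hg0 hg1 hg2 _ Hb _ Hc.
have sq : (1 + beta) ^+ 2 = (1 + gamma) ^+ 2 <-> (beta = gamma \/ beta + gamma = -2).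
  have E : (1 + beta) ^+ 2 - (1 + gamma) ^+ 2 = (beta - gamma) * (beta + gamma + 2) by ring.
  split.
    move/eqP; rewrite -subr_eq0 E mulf_eq0 => /orP [|].
      by rewrite subr_eq0 => /eqP; left.
    by rewrite addr_eq0 => /eqP; right.
  move=> h; apply/eqP; rewrite -subr_eq0 E mulf_eq0; case: h => h.
    by rewrite h subrr eqxx.
  by rewrite h addNr eqxx orbT.
have key : M_iso b c <-> (beta = gamma \/ beta + gamma = -2).
  split.
  - case=> phi [Hinv Hcm].
    have Hx : forall j, mx2_eq (mx2mul (phi (ordS j)) (xmat b j)) (mx2mul (xmat c j) (phi j)).
      by move=> j; case: (Hcm j).
    have [a1 a2 a3 [a4 a5 a6]] := get_pair2 _ _ _ _ 0 0 1 2 Hx isT erefl erefl erefl.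
    have [b1 b2 b3 [b4 b5 b6]] := get_pair2 _ _ _ _ 1 2 3 4 Hx isT erefl erefl erefl.
    have [d1 d2 d3 [d4 d5 d6]] := get_pair2 _ _ _ _ 4 8 9 0 Hx isT erefl erefl erefl.
    have tc0 : c (inord 0) 0%N + c (inord 1) 0%N = gamma := equal_f (tuple_Cs _ _ _ Hc 0 isT) 0%N.
    have tb0 : b (inord 0) 0%N + b (inord 1) 0%N = beta := equal_f (tuple_Cs _ _ _ Hb 0 isT) 0%N.
    have tc1 : c (inord 2) 0%N + c (inord 3) 0%N = 1 := equal_f (tuple_Cs _ _ _ Hc 1 isT) 0%N.
    have tb1 : b (inord 2) 0%N + b (inord 3) 0%N = 1 := equal_f (tuple_Cs _ _ _ Hb 1 isT) 0%N.
    have tc4 : c (inord 8) 0%N + c (inord 9) 0%N = 1 := equal_f (tuple_Cs _ _ _ Hc 4 isT) 0%N.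
    have tb4 : b (inord 8) 0%N + b (inord 9) 0%N = 1 := equal_f (tuple_Cs _ _ _ Hb 4 isT) 0%N.
    have hdet := inv_const _ _ (Hinv (inord 0)).
    rewrite a1 mulr0 subr0 in hdet.
    rewrite tc0 tb0 in a4 a5 a6.
    rewrite tc1 tb1 !mul1r a2 in b6.
    rewrite tc4 tb4 !mul1r in d4 d5 d6.
    exact: (final_alg _ _ _ _ _ _ _ _ _ _ _ a6 a4 a5 b6 d4 d5 d6 d2 hdet).
  - have tb := tuple_Cs _ _ _ Hb; have tc := tuple_Cs _ _ _ Hc.
    have b2 : beta + 2 != 0 by rewrite addr_eq0.
    case=> h.
      subst gamma.
      apply: (iso_of _ beta beta 0 1 1 b c tb tc).
      + by move=> k; case: k => [|[|[|[|[|k]]]]] //= _; ring.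
      + move=> k; case: k => [|[|[|[|[|k]]]]] //= _; apply: (neq0_of _ _ 1);
          (try exact: oner_neq0); ring.
      + by rewrite /=; ring.
      + by rewrite /=; ring.
    have hg : gamma = -2 - beta by rewrite -h; ring.
    clear h; subst gamma.
    apply: (iso_of _ beta (-2 - beta) 2 (2 + beta) beta b c tb tc).
    + by move=> k; case: k => [|[|[|[|[|k]]]]] //= _; ring.
    + have nz : (beta + 2) * beta != 0 by rewrite mulf_neq0.
      move=> k; case: k => [|[|[|[|[|k]]]]] //= _; apply: (neq0_of _ _ _ _ nz);
        ring.
    + by rewrite /=; ring.
    + by rewrite /=; ring.
split; split => H.
- by apply/sq; apply/key.
- by apply/key; apply/sq.
- by apply/key.
- by apply/key.
Qed.
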